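(* Let $A\in\mathbb{R}^{m\times n}_+$ with every row containing a positive entry, $r\in\mathbb{R}^m_{+}$, $c\in\mathbb{R}^n_+$, $y\in\mathbb{R}^n_{++}$, let $T\subseteq[n]$ have margin $\gamma$, and let $h:=h^{A,r,y}_T$. Then for any $\alpha$ satisfying $0\le h(\alpha)-h(1)\le\gamma$, the scaling $y':=y\circ(1_{\bar T}+\alpha1_T)$ satisfies \[\|c^{A,r}(y)-c\|_2^2-\|c^{A,r}(y')-c\|_2^2\ge2\gamma(h(\alpha)-h(1)).\]
   Context: $c^{A,r}_j(y):=\sum_{i\in[m]}r_i\frac{A_{ij}y_j}{\sum_{k\in[n]}A_{ik}y_k}$. $\bar T=[n]\setminus T$, $1_T$ the indicator of $T$, $\circ$ the entrywise product. Margin of $T$: the largest $\gamma\ge0$ such that some $\nu\in\mathbb{R}$ satisfies $\max_{j\in T}(c^{A,r}_j(y)-c_j)\le\nu-\gamma\le\nu+\gamma\le\min_{j\notin T}(c^{A,r}_j(y)-c_j)$. Proxy function: $h^{A,r,y}_T(\alpha):=\sum_{j\in T}c^{A,r}_j(y\circ(1_{\bar T}+\alpha1_T))$, $\alpha>0$. *)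

(* Defs.v *)
From HB Require Import structures.
From mathcomp Require Import all_boot all_order all_algebra.
Set Implicit Arguments. Unset Strict Implicit. Unset Printing Implicit Defensive.
Import Order.TTheory GRing.Theory Num.Theory.
Local Open Scope ring_scope.

Definition cAr (R : realFieldType) (m n : nat) (A : 'M[R]_(m, n))
  (r : 'I_m -> R) (y : 'I_n -> R) (j : 'I_n) : R :=
  \sum_(i < m) r i * (A i j * y j / \sum_(k < n) A i k * y k).

Definition scaleT (R : realFieldType) (n : nat) (y : 'I_n -> R)
  (T : {set 'I_n}) (alpha : R) (j : 'I_n) : R :=
  y j * (if j \in T then alpha else 1).

Definition proxy_h (R : realFieldType) (m n : nat) (A : 'M[R]_(m, n))
  (r : 'I_m -> R) (y : 'I_n -> R) (T : {set 'I_n}) (alpha : R) : R :=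
  \sum_(j in T) cAr A r (scaleT y T alpha) j.

Definition margin_ok (R : realFieldType) (m n : nat) (A : 'M[R]_(m, n))
  (r : 'I_m -> R) (c y : 'I_n -> R) (T : {set 'I_n}) (gamma nu : R) : Prop :=
  0 <= gamma /\
  (forall j, j \in T -> cAr A r y j - c j <= nu - gamma) /\
  (forall j, j \notin T -> nu + gamma <= cAr A r y j - c j).

Definition has_margin (R : realFieldType) (m n : nat) (A : 'M[R]_(m, n))
  (r : 'I_m -> R) (c y : 'I_n -> R) (T : {set 'I_n}) (gamma : R) : Prop :=
  (exists nu, margin_ok A r c y T gamma nu) /\
  (forall g', (exists nu, margin_ok A r c y T g' nu) -> g' <= gamma).

Definition sqdist (R : realFieldType) (n : nat) (u v : 'I_n -> R) : R :=
  \sum_(j < n) (u j - v j) ^+ 2.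

(* Main.v *)
Require Import Defs.
From HB Require Import structures.
From mathcomp Require Import all_boot all_order all_algebra.
From mathcomp Require Import ring lra.
Import Order.TTheory GRing.Theory Num.Theory.
Local Open Scope ring_scope.

Lemma rowpos (R : realFieldType) m n (A : 'M[R]_(m,n)) (y : 'I_n -> R) i :
  (forall i j, 0 <= A i j) -> (exists j, 0 < A i j) -> (forall j, 0 < y j) ->
  0 < \sum_(k < n) A i k * y k.
Proof.
move=> A0 [j Aj] yp; rewrite (bigD1 j) //=.
apply: (lt_le_trans (y:= A i j * y j)); first exact: mulr_gt0.
rewrite lerDl; apply: sumr_ge0 => k _; apply: mulr_ge0 => //; exact: ltW.
Qed.

Lemma cAr_total (R : realFieldType) m n (A : 'M[R]_(m,n)) r (y : 'I_n -> R) :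
  (forall i j, 0 <= A i j) -> (forall i, exists j, 0 < A i j) -> (forall j, 0 < y j) ->
  \sum_(j < n) cAr A r y j = \sum_(i < m) r i.
Proof.
move=> A0 Ap yp; rewrite /cAr exchange_big /=; apply: eq_bigr => i _.
rewrite -mulr_sumr -mulr_suml mulfV ?mulr1 //; apply: lt0r_neq0; exact: rowpos.
Qed.

Lemma cAr_ext (R : realFieldType) m n (A : 'M[R]_(m,n)) r (y1 y2 : 'I_n -> R) j :
  (forall k, y1 k = y2 k) -> cAr A r y1 j = cAr A r y2 j.
Proof.
move=> e; rewrite /cAr; apply: eq_bigr => i _; rewrite e; congr (_ * (_ / _)).
by apply: eq_bigr => k _; rewrite e.
Qed.

Lemma rowsplit (R : realFieldType) m n (A : 'M[R]_(m,n)) (y : 'I_n -> R) (T : {set 'I_n}) (alpha : R) i :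
  \sum_(k < n) A i k * scaleT y T alpha k =
  alpha * \sum_(k < n | k \in T) A i k * y k + \sum_(k < n | k \notin T) A i k * y k.
Proof.
rewrite (bigID (fun k => k \in T)) /= mulr_sumr; congr (_ + _); apply: eq_bigr => k kT.
  by rewrite /scaleT kT; ring.
by rewrite /scaleT (negbTE kT) mulr1.
Qed.

Lemma each_ge0 (R : realFieldType) n (P : pred 'I_n) (F : 'I_n -> R) :
  (forall j, P j -> F j <= 0) -> 0 <= \sum_(j | P j) F j -> forall j, P j -> 0 <= F j.
Proof.
move=> Fle sge j Pj; move: sge; rewrite (bigD1 j) //=.
have : \sum_(k | P k && (k != j)) F k <= 0 by apply: sumr_le0 => k /andP[Pk _]; exact: Fle.
move=> H1 H2; lra.
Qed.

Lemma each_le (R : realFieldType) n (P : pred 'I_n) (F : 'I_n -> R) :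
  (forall j, P j -> 0 <= F j) -> forall j, P j -> F j <= \sum_(j | P j) F j.
Proof.
move=> Fge j Pj; rewrite (bigD1 j) //=.
have : 0 <= \sum_(k | P k && (k != j)) F k by apply: sumr_ge0 => k /andP[Pk _]; exact: Fge.
move=> H1; lra.
Qed.

Lemma diffT (R : realFieldType) m n (A : 'M[R]_(m,n)) r (y : 'I_n -> R) (T : {set 'I_n}) (alpha : R) (j : 'I_n) :
  (forall i j, 0 <= A i j) -> (forall i, exists j, 0 < A i j) -> (forall j, 0 < y j) -> (forall i, 0 <= r i) ->
  0 < alpha ->
  (j \in T -> exists2 N, 0 <= N & cAr A r (scaleT y T alpha) j - cAr A r y j = (alpha - 1) * N) /\
  (j \notin T -> exists2 N, 0 <= N & cAr A r (scaleT y T alpha) j - cAr A r y j = (1 - alpha) * N).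
Proof.
move=> A0 Ap yp r0 a0.
have y'p : forall j, 0 < scaleT y T alpha j.
  by move=> k; rewrite /scaleT; case: (k \in T) => //; rewrite ?mulr1 // mulr_gt0.
pose S i := \sum_(k < n | k \in T) A i k * y k.
pose U i := \sum_(k < n | k \notin T) A i k * y k.
have eD' : forall i, \sum_(k < n) A i k * scaleT y T alpha k = alpha * S i + U i.
  by move=> i; rewrite rowsplit.
have eD : forall i, \sum_(k < n) A i k * y k = S i + U i.
  move=> i; rewrite (bigID (fun k => k \in T)) //.
have D'p : forall i, 0 < alpha * S i + U i by move=> i; rewrite -eD'; exact: (@rowpos _ _ _ A _ i A0 (Ap i) y'p).
have Dp : forall i, 0 < S i + U i by move=> i; rewrite -eD; exact: (@rowpos _ _ _ A _ i A0 (Ap i) yp).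
have S0 : forall i, 0 <= S i by move=> i; apply: sumr_ge0 => k _; apply: mulr_ge0 => //; exact: ltW.
have U0 : forall i, 0 <= U i by move=> i; apply: sumr_ge0 => k _; apply: mulr_ge0 => //; exact: ltW.
split=> jT.
- exists (\sum_(i < m) r i * (A i j * y j * U i / ((alpha * S i + U i) * (S i + U i)))).
    apply: sumr_ge0 => i _; apply: mulr_ge0; first exact: r0.
    apply: divr_ge0; first by apply: mulr_ge0 => //; apply: mulr_ge0 => //; exact: ltW.
    by apply: mulr_ge0; exact: ltW.
  rewrite /cAr -sumrB mulr_sumr; apply: eq_bigr => i _.
  rewrite eD' eD /scaleT jT; field.
  by apply/andP; split; apply: lt0r_neq0.
- exists (\sum_(i < m) r i * (A i j * y j * S i / ((alpha * S i + U i) * (S i + U i)))).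
    apply: sumr_ge0 => i _; apply: mulr_ge0; first exact: r0.
    apply: divr_ge0; first by apply: mulr_ge0 => //; apply: mulr_ge0 => //; exact: ltW.
    by apply: mulr_ge0; exact: ltW.
  rewrite /cAr -sumrB mulr_sumr; apply: eq_bigr => i _.
  rewrite eD' eD /scaleT (negbTE jT) mulr1; field.
  by apply/andP; split; apply: lt0r_neq0.
Qed.

Theorem lemma6p7 (R : realFieldType) (m n : nat) (A : 'M[R]_(m, n))
  (r : 'I_m -> R) (c y : 'I_n -> R) (T : {set 'I_n}) (gamma alpha : R) :
  (forall i j, 0 <= A i j) ->
  (forall i, exists j, 0 < A i j) ->
  (forall i, 0 <= r i) ->
  (forall j, 0 <= c j) ->
  (forall j, 0 < y j) ->
  has_margin A r c y T gamma ->
  0 < alpha ->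
  0 <= proxy_h A r y T alpha - proxy_h A r y T 1 <= gamma ->
  sqdist (cAr A r y) c - sqdist (cAr A r (scaleT y T alpha)) c >=
    2 * gamma * (proxy_h A r y T alpha - proxy_h A r y T 1).
Proof.
move=> A0 Ap r0 c0 yp [[nu [g0 [HT HnT]]] _] a0 /andP[d0 dg].
have y'p : forall j, 0 < scaleT y T alpha j.
  by move=> k; rewrite /scaleT; case: (k \in T) => //; rewrite ?mulr1 // mulr_gt0.
have h1 : proxy_h A r y T 1 = \sum_(j in T) cAr A r y j.
  rewrite /proxy_h; apply: eq_bigr => j _; apply: cAr_ext => k.
  by rewrite /scaleT; case: (k \in T); rewrite mulr1.
set d := proxy_h A r y T alpha - proxy_h A r y T 1.
have hd : d = \sum_(j in T) (cAr A r (scaleT y T alpha) j - cAr A r y j).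
  by rewrite /d h1 /proxy_h sumrB.
have hd2 : d = \sum_(j < n | j \notin T) (cAr A r y j - cAr A r (scaleT y T alpha) j).
  have t1 := @cAr_total _ _ _ A r y A0 Ap yp; have t2 := @cAr_total _ _ _ A r _ A0 Ap y'p.
  move: t1 t2; rewrite (bigID (fun j => j \in T)) /= => t1.
  rewrite (bigID (fun j => j \in T)) /= => t2.
  rewrite hd !sumrB; lra.
have sT : forall j, j \in T -> 0 <= cAr A r (scaleT y T alpha) j - cAr A r y j.
  case: (lerP 1 alpha) => ha.
    move=> j jT; have [H _] := @diffT _ _ _ A r y T alpha j A0 Ap yp r0 a0; have [N N0 ->] := H jT.
    by apply: mulr_ge0 => //; rewrite subr_ge0.
  apply: (@each_ge0 _ _ (fun j => j \in T)); last by rewrite -hd.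
  move=> j jT; have [H _] := @diffT _ _ _ A r y T alpha j A0 Ap yp r0 a0; have [N N0 ->] := H jT.
  apply: mulr_le0_ge0 => //; rewrite subr_le0; exact: ltW.
have snT : forall j, j \notin T -> 0 <= cAr A r y j - cAr A r (scaleT y T alpha) j.
  case: (lerP 1 alpha) => ha.
    move=> j jT; have [_ H] := @diffT _ _ _ A r y T alpha j A0 Ap yp r0 a0; have [N N0 e] := H jT.
    have : (1 - alpha) * N <= 0 by apply: mulr_le0_ge0 => //; rewrite subr_le0.
    move: e; set u := cAr _ _ _ j; set v := cAr _ _ _ j; lra.
  apply: (@each_ge0 _ _ (fun j => j \notin T)); last by rewrite -hd2.
  move=> j jT; have [_ H] := @diffT _ _ _ A r y T alpha j A0 Ap yp r0 a0; have [N N0 e] := H jT.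
  have : 0 <= (1 - alpha) * N by apply: mulr_ge0 => //; rewrite subr_ge0; exact: ltW.
  move: e; set u := cAr _ _ _ j; set v := cAr _ _ _ j; lra.
have leT : forall j, j \in T -> cAr A r (scaleT y T alpha) j - cAr A r y j <= d.
  by move=> j jT; rewrite hd; exact: (@each_le _ _ (fun j => j \in T)).
have lenT : forall j, j \notin T -> cAr A r y j - cAr A r (scaleT y T alpha) j <= d.
  by move=> j jT; rewrite hd2; exact: (@each_le _ _ (fun j => j \notin T)).
rewrite /sqdist -sumrB (bigID (fun j => j \in T)) /=.
have L1 : \sum_(j < n | j \in T) ((cAr A r (scaleT y T alpha) j - cAr A r y j) * (- (2 * (nu - gamma) + d)))
   <= \sum_(j < n | j \in T) ((cAr A r y j - c j) ^+ 2 - (cAr A r (scaleT y T alpha) j - c j) ^+ 2).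
  apply: ler_sum => j jT.
  have h1' := HT j jT; have h2 := sT j jT; have h3 := leT j jT.
  move: h1' h2 h3; set u := cAr A r y j; set v := cAr _ _ _ j => h1' h2 h3.
  have p1 : 0 <= (v - u) * (nu - gamma - (u - c j)) by apply: mulr_ge0; lra.
  have p2 : 0 <= (v - u) * (d - (v - u)) by apply: mulr_ge0; lra.
  nra.
have L2 : \sum_(j < n | j \notin T) ((cAr A r y j - cAr A r (scaleT y T alpha) j) * (2 * (nu + gamma) - d))
   <= \sum_(j < n | j \notin T) ((cAr A r y j - c j) ^+ 2 - (cAr A r (scaleT y T alpha) j - c j) ^+ 2).
  apply: ler_sum => j jT.
  have h1' := HnT j jT; have h2 := snT j jT; have h3 := lenT j jT.
  move: h1' h2 h3; set u := cAr A r y j; set v := cAr _ _ _ j => h1' h2 h3.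
  have p1 : 0 <= (u - v) * ((u - c j) - (nu + gamma)) by apply: mulr_ge0; lra.
  have p2 : 0 <= (u - v) * (d - (u - v)) by apply: mulr_ge0; lra.
  nra.
move: L1 L2; rewrite -!mulr_suml -hd -hd2 => L1 L2.
have d0' : 0 <= d := d0. have dg' : d <= gamma := dg.
have p : 0 <= d * (gamma - d) by apply: mulr_ge0; lra.
nra.
Qed.
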